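(* (1) For every $\mathtt{dCBN}$ term $M$: $\mathrm{nf}(\mathcal T^n(M))=\emptyset$ if and only if $\mathrm{nf}(\mathcal T(M^n))=\emptyset$. (2) For every $\mathtt{dCBV}$ term $M$: $\mathrm{nf}(\mathcal T^v(M))=\emptyset$ if and only if $\mathrm{nf}(\mathcal T(M^v))=\emptyset$.
   Context: \textbf{Translations.} $\mathtt{dBang}$ terms: $M ::= x\mid\lambda x.M\mid MN\mid M[N/x]\mid\ !M\mid\mathrm{der}\,M$. $\mathtt{dCBN}$/$\mathtt{dCBV}$ terms: $M::=x\mid\lambda x.M\mid MN\mid M[N/x]$; values $V::=x\mid\lambda x.M$; list contexts $L::=\square\mid L[N/x]$. $x^n=x$, $(\lambda x.M)^n=\lambda x.M^n$, $(MN)^n=M^n\,!N^n$, $(M[N/x])^n=M^n[!N^n/x]$. $x^v=!x$, $(\lambda x.M)^v=!(\lambda x.M^v)$, $(MN)^v=L\langle P\rangle N^v$ if $M^v=L\langle !P\rangle$, else $\mathrm{der}(M^v)\,N^v$; $(M[N/x])^v=M^v[N^v/x]$. \textbf{Resource calculus.} Resource terms $m,n::=x\mid\lambda x.m\mid mn\mid m[n/x]\mid\mathrm{der}\,m\mid[m_1,\dots,m_k]$; $l::=\square\mid l[n/x]$. Reduction (to a resource term or zero $\emptyset$), closed under all contexts: $\mathrm{der}(l\langle[m]\rangle)\to l\langle m\rangle$; $\mathrm{der}(l\langle[m_1,\dots,m_k]\rangle)\to\emptyset$ if $k\ne1$; $l\langle\lambda x.m\rangle n\to l\langle m[n/x]\rangle$;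 $m[l\langle[n_1,\dots,n_k]\rangle/x]\to l\langle m\{n_{\sigma(1)}/x_1,\dots,n_{\sigma(k)}/x_k\}\rangle$ for each permutation $\sigma$ when $x_1,\dots,x_k$ are exactly the free occurrences of $x$ in $m$, else $\to\emptyset$. For a set $X$ of resource terms, $\mathrm{nf}(X)$ is the set of normal resource terms $p$ with $m\to^*p$ for some $m\in X$. \textbf{Taylor expansions.} dBang: $x\sqsubset x$; $\lambda x.m\sqsubset\lambda x.M$; $mn\sqsubset MN$; $m[n/x]\sqsubset M[N/x]$; $\mathrm{der}\,m\sqsubset\mathrm{der}\,M$ (componentwise); $[m_1,\dots,m_k]\sqsubset\ !M$ if all $m_i\sqsubset M$; $\mathcal T(M)=\{m\mid m\sqsubset M\}$. dCBN: $x\sqsubset_n x$; $\lambda x.m\sqsubset_n\lambda x.M$ if $m\sqsubset_n M$; $m[n_1,\dots,n_k]\sqsubset_n MN$ and $m[[n_1,\dots,n_k]/x]\sqsubset_n M[N/x]$ if $m\sqsubset_n M$, all $n_i\sqsubset_n N$; $\mathcal T^n(M)=\{m\mid m\sqsubset_n M\}$. dCBV: $[x,\dots,x]\sqsubset_v x$; $[\lambda x.m_1,\dots,\lambda x.m_k]\sqsubset_v\lambda x.M$ if all $m_i\sqsubset_v M$; $\mathrm{der}(m)\,n\sqsubset_v MN$ if $m\sqsubset_v M$, $n\sqsubset_v N$ and $M$ is not of the form $L\langle V\rangle$; $l\langle m\rangle n\sqsubset_v L\langle V\rangle N$ if $[m]\sqsubset_v V$, $n\sqsubset_v N$ and $l=\square[p_1/y_1]\cdots[p_j/y_j]$,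 $L=\square[P_1/y_1]\cdots[P_j/y_j]$, $p_i\sqsubset_v P_i$; $m[n/x]\sqsubset_v M[N/x]$ if $m\sqsubset_v M,n\sqsubset_v N$; $\mathcal T^v(M)=\{m\mid m\sqsubset_v M\}$. *)

(* Defs.v *)
(* Terms use de Bruijn indices (index 0 = innermost binder).
   Binders: lambda binds its body; explicit substitution M[N/x] is
   written ES M N and binds index 0 in M (N is outside the binder). *)
From Stdlib Require Import List Arith Permutation Relations.
Import ListNotations.

Inductive bterm : Type :=
| BVar : nat -> bterm
| BLam : bterm -> bterm
| BApp : bterm -> bterm -> bterm
| BES  : bterm -> bterm -> bterm
| BBang : bterm -> bterm
| BDer : bterm -> bterm.

Inductive lterm : Type :=
| LVar : nat -> lterm
| LLam : lterm -> lterm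
| LApp : lterm -> lterm -> lterm
| LES  : lterm -> lterm -> lterm.

Definition is_value (M : lterm) : Prop :=
  match M with LVar _ | LLam _ => True | _ => False end.

(* list contexts: L = box[P1/y1]...[Pj/yj], the list [P1;...;Pj] *)
Definition lplug (t : lterm) (L : list lterm) : lterm :=
  fold_left (fun acc p => LES acc p) L t.

Definition bplug (t : bterm) (L : list bterm) : bterm :=
  fold_left (fun acc p => BES acc p) L t.

Fixpoint transN (M : lterm) : bterm :=
  match M with
  | LVar x => BVar x
  | LLam M => BLam (transN M)
  | LApp M N => BApp (transN M) (BBang (transN N))
  | LES M N => BES (transN M) (BBang (transN N))
  end.

Fixpoint split_bang (t : bterm) : option (list bterm * bterm) :=
  match t with
  | BBang P => Some ([], P)
  | BES t' q =>
      match split_bang t' with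
      | Some (L, P) => Some (L ++ [q], P)
      | None => None
      end
  | _ => None
  end.

Fixpoint transV (M : lterm) : bterm :=
  match M with
  | LVar x => BBang (BVar x)
  | LLam M => BBang (BLam (transV M))
  | LApp M N =>
      let mv := transV M in
      match split_bang mv with
      | Some (L, P) => BApp (bplug P L) (transV N)
      | None => BApp (BDer mv) (transV N)
      end
  | LES M N => BES (transV M) (transV N)
  end.

Inductive rterm : Type :=
| RVar : nat -> rterm
| RLam : rterm -> rterm
| RApp : rterm -> rterm -> rterm
| RES  : rterm -> rterm -> rterm      (* m[n/x], binds index 0 in m *)
| RDer : rterm -> rterm
| RBag : list rterm -> rterm.

Definition rplug (t : rterm) (l : list rterm) : rterm :=
  fold_left (fun acc p => RES acc p) l t.

Fixpoint rlift (c k : nat) (t : rterm) : rterm :=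
  match t with
  | RVar i => if i <? c then RVar i else RVar (i + k)
  | RLam m => RLam (rlift (S c) k m)
  | RApp m n => RApp (rlift c k m) (rlift c k n)
  | RES m n => RES (rlift (S c) k m) (rlift c k n)
  | RDer m => RDer (rlift c k m)
  | RBag ms => RBag (map (rlift c k) ms)
  end.

Fixpoint occ (d : nat) (t : rterm) : nat :=
  match t with
  | RVar i => if i =? d then 1 else 0
  | RLam m => occ (S d) m
  | RApp m n => occ d m + occ d n
  | RES m n => occ (S d) m + occ d n
  | RDer m => occ d m
  | RBag ms => list_sum (map (occ d) ms)
  end.

(* Linear substitution.  m lives in context G,x (x = index 0 at depth d);
   the terms ns live in context G,l where l consists of j binders.
   The successive free occurrences of x (left to right) are replaced by the
   successive elements of ns; the result lives in context G,l.
   Returns the resulting term and the unused elements of ns. *)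
Fixpoint lsub (d j : nat) (t : rterm) (ns : list rterm) : rterm * list rterm :=
  match t with
  | RVar i =>
      if i <? d then (RVar i, ns)
      else if i =? d then
        match ns with
        | n :: ns' => (rlift 0 d n, ns')
        | [] => (RVar i, [])
        end
      else (RVar (i - 1 + j), ns)
  | RLam m => let (m', r) := lsub (S d) j m ns in (RLam m', r)
  | RApp m n =>
      let (m', r1) := lsub d j m ns in
      let (n', r2) := lsub d j n r1 in (RApp m' n', r2)
  | RES m n =>
      let (m', r1) := lsub (S d) j m ns in
      let (n', r2) := lsub d j n r1 in (RES m' n', r2)
  | RDer m => let (m', r) := lsub d j m ns in (RDer m', r)
  | RBag ms =>
      let fix go (ms : list rterm) (ns : list rterm) : list rterm * list rterm :=
        match ms with
        | [] => ([], ns)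
        | m :: ms' =>
            let (m', r1) := lsub d j m ns in
            let (ms'', r2) := go ms' r1 in (m' :: ms'', r2)
        end in
      let (ms', r) := go ms ns in (RBag ms', r)
  end.

Definition linsubst (m : rterm) (j : nat) (ns : list rterm) : rterm :=
  fst (lsub 0 j m ns).

(* step m m'  : m -> m' (a resource term);  step0 m : m -> zero *)
Inductive step : rterm -> rterm -> Prop :=
| st_der : forall l m,
    step (RDer (rplug (RBag [m]) l)) (rplug m l)
| st_beta : forall l m n,
    step (RApp (rplug (RLam m) l) n)
         (rplug (RES m (rlift 0 (length l) n)) l)
| st_es : forall l m ns ns',
    occ 0 m = length ns -> Permutation ns ns' ->
    step (RES m (rplug (RBag ns) l)) (rplug (linsubst m (length l) ns') l)
| st_lam : forall m m', step m m' -> step (RLam m) (RLam m')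
| st_appl : forall m m' n, step m m' -> step (RApp m n) (RApp m' n)
| st_appr : forall m n n', step n n' -> step (RApp m n) (RApp m n')
| st_esl : forall m m' n, step m m' -> step (RES m n) (RES m' n)
| st_esr : forall m n n', step n n' -> step (RES m n) (RES m n')
| st_derc : forall m m', step m m' -> step (RDer m) (RDer m')
| st_bag : forall ms1 m m' ms2, step m m' ->
    step (RBag (ms1 ++ m :: ms2)) (RBag (ms1 ++ m' :: ms2)).

Inductive step0 : rterm -> Prop :=
| st0_der : forall l ms, length ms <> 1 -> step0 (RDer (rplug (RBag ms) l))
| st0_es : forall l m ns, occ 0 m <> length ns ->
    step0 (RES m (rplug (RBag ns) l))
| st0_lam : forall m, step0 m -> step0 (RLam m)
| st0_appl : forall m n, step0 m -> step0 (RApp m n)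
| st0_appr : forall m n, step0 n -> step0 (RApp m n)
| st0_esl : forall m n, step0 m -> step0 (RES m n)
| st0_esr : forall m n, step0 n -> step0 (RES m n)
| st0_derc : forall m, step0 m -> step0 (RDer m)
| st0_bag : forall ms1 m ms2, step0 m -> step0 (RBag (ms1 ++ m :: ms2)).

Definition reds : rterm -> rterm -> Prop := clos_refl_trans rterm step.

Definition rnormal (p : rterm) : Prop := (forall q, ~ step p q) /\ ~ step0 p.

Definition nf (X : rterm -> Prop) (p : rterm) : Prop :=
  rnormal p /\ exists m, X m /\ reds m p.

Definition nf_empty (X : rterm -> Prop) : Prop := forall p, ~ nf X p.

Inductive tayB : rterm -> bterm -> Prop :=
| tB_var : forall x, tayB (RVar x) (BVar x)
| tB_lam : forall m M, tayB m M -> tayB (RLam m) (BLam M)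
| tB_app : forall m n M N, tayB m M -> tayB n N -> tayB (RApp m n) (BApp M N)
| tB_es : forall m n M N, tayB m M -> tayB n N -> tayB (RES m n) (BES M N)
| tB_der : forall m M, tayB m M -> tayB (RDer m) (BDer M)
| tB_bang : forall ms M, Forall (fun m => tayB m M) ms -> tayB (RBag ms) (BBang M).

Inductive tayN : rterm -> lterm -> Prop :=
| tN_var : forall x, tayN (RVar x) (LVar x)
| tN_lam : forall m M, tayN m M -> tayN (RLam m) (LLam M)
| tN_app : forall m ns M N, tayN m M -> Forall (fun n => tayN n N) ns ->
    tayN (RApp m (RBag ns)) (LApp M N)
| tN_es : forall m ns M N, tayN m M -> Forall (fun n => tayN n N) ns ->
    tayN (RES m (RBag ns)) (LES M N).

Inductive tayV : rterm -> lterm -> Prop :=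
| tV_var : forall x ms, Forall (fun m => m = RVar x) ms ->
    tayV (RBag ms) (LVar x)
| tV_lam : forall ms M,
    Forall (fun m => exists m', m = RLam m' /\ tayV m' M) ms ->
    tayV (RBag ms) (LLam M)
| tV_der : forall m n M N, tayV m M -> tayV n N ->
    ~ (exists L V, is_value V /\ M = lplug V L) ->
    tayV (RApp (RDer m) n) (LApp M N)
| tV_app : forall m n ps V Ps N, is_value V ->
    tayV (RBag [m]) V -> tayV n N -> Forall2 tayV ps Ps ->
    tayV (RApp (rplug m ps) n) (LApp (lplug V Ps) N)
| tV_es : forall m n M N, tayV m M -> tayV n N -> tayV (RES m n) (LES M N).

Definition TB (M : bterm) : rterm -> Prop := fun m => tayB m M.
Definition TN (M : lterm) : rterm -> Prop := fun m => tayN m M.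
Definition TV (M : lterm) : rterm -> Prop := fun m => tayV m M.

(* Main.v *)
Require Import Defs.
From Stdlib Require Import List Arith Permutation Relations Lia.
Import ListNotations.

Lemma tayN_iff : forall M m, tayN m M <-> tayB m (transN M).
Proof.
  induction M; intro m; simpl; split; intro H; inversion H; subst.
  - constructor.
  - constructor.
  - constructor; apply IHM; auto.
  - constructor; apply IHM; auto.
  - constructor; [apply IHM1; auto|]. constructor.
    eapply Forall_impl; [|eassumption]. intros a Ha; apply IHM2; auto.
  - match goal with Hb : tayB _ (BBang _) |- _ => inversion Hb; subst end.
    constructor; [apply IHM1; auto|].
    eapply Forall_impl; [|eassumption]. intros a Ha; apply IHM2; auto.
  - constructor; [apply IHM1; auto|]. constructor.
    eapply Forall_impl; [|eassumption]. intros a Ha; apply IHM2; auto.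
  - match goal with Hb : tayB _ (BBang _) |- _ => inversion Hb; subst end.
    constructor; [apply IHM1; auto|].
    eapply Forall_impl; [|eassumption]. intros a Ha; apply IHM2; auto.
Qed.

Fixpoint lsize (M : lterm) : nat :=
  match M with
  | LVar _ => 1
  | LLam M => S (lsize M)
  | LApp M N => S (lsize M + lsize N)
  | LES M N => S (lsize M + lsize N)
  end.

Fixpoint lsplit (M : lterm) : option (lterm * list lterm) :=
  match M with
  | LVar _ | LLam _ => Some (M, [])
  | LES M' q => match lsplit M' with
                | Some (V, Ps) => Some (V, Ps ++ [q])
                | None => None end
  | _ => None
  end.

Definition inner (V : lterm) : bterm :=
  match V with
  | LVar x => BVar x
  | LLam M => BLam (transV M)
  | _ => BVar 0
  end.

Lemma lplug_snoc : forall V Ps q, lplug V (Ps ++ [q]) = LES (lplug V Ps) q.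
Proof. intros; unfold lplug; rewrite fold_left_app; reflexivity. Qed.
Lemma bplug_snoc : forall V Ps q, bplug V (Ps ++ [q]) = BES (bplug V Ps) q.
Proof. intros; unfold bplug; rewrite fold_left_app; reflexivity. Qed.
Lemma rplug_snoc : forall V Ps q, rplug V (Ps ++ [q]) = RES (rplug V Ps) q.
Proof. intros; unfold rplug; rewrite fold_left_app; reflexivity. Qed.

Lemma lsplit_sound : forall M V Ps, lsplit M = Some (V, Ps) ->
  is_value V /\ M = lplug V Ps.
Proof.
  induction M; simpl; intros V Ps H; try discriminate.
  - inversion H; subst; simpl; auto.
  - inversion H; subst; simpl; auto.
  - destruct (lsplit M1) as [[V' Ps']|] eqn:E; try discriminate.
    inversion H; subst. destruct (IHM1 _ _ eq_refl). split; auto.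
    rewrite lplug_snoc; congruence.
Qed.

Lemma lsplit_complete : forall Ps V, is_value V -> lsplit (lplug V Ps) = Some (V, Ps).
Proof.
  induction Ps using rev_ind; intros V HV.
  - destruct V; simpl in *; tauto.
  - rewrite lplug_snoc; simpl. rewrite IHPs; auto.
Qed.

Lemma split_bang_transV : forall M,
  split_bang (transV M) = match lsplit M with
                          | Some (V, Ps) => Some (map transV Ps, inner V)
                          | None => None end.
Proof.
  induction M; simpl; auto.
  - destruct (split_bang (transV M1)) as [[L P]|]; reflexivity.
  - rewrite IHM1. destruct (lsplit M1) as [[V Ps]|]; auto.
    rewrite map_app; reflexivity.
Qed.

Lemma lsize_lplug : forall Ps V,
  lsize (lplug V Ps) = lsize V + list_sum (map (fun p => S (lsize p)) Ps).
Proof.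
  induction Ps; intros V; simpl; [lia|].
  change (fold_left (fun acc p => LES acc p) Ps (LES V a)) with (lplug (LES V a) Ps).
  rewrite IHPs; simpl; lia.
Qed.

Lemma list_sum_in : forall (f : lterm -> nat) P Ps, In P Ps -> f P <= list_sum (map f Ps).
Proof.
  induction Ps; simpl; intros H; [contradiction|]. destruct H; subst; [lia|].
  specialize (IHPs H); lia.
Qed.

Lemma rplug_tay : forall ps L m0 P, tayB m0 P -> Forall2 tayB ps L ->
  tayB (rplug m0 ps) (bplug P L).
Proof.
  intros ps L m0 P H0 HF; revert m0 P H0; induction HF; intros m0 P Hm; simpl; auto.
  apply IHHF. constructor; auto.
Qed.

Lemma tay_bplug_inv : forall L P m, tayB m (bplug P L) ->
  exists m0 ps, m = rplug m0 ps /\ tayB m0 P /\ Forall2 tayB ps L.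
Proof.
  induction L using rev_ind; intros P m H.
  - exists m, []; simpl; auto.
  - rewrite bplug_snoc in H. inversion H; subst.
    destruct (IHL _ _ ltac:(eassumption)) as [m1 [ps [-> [Hm HF]]]].
    exists m1, (ps ++ [n]). rewrite rplug_snoc. repeat split; auto.
    apply Forall2_app; auto.
Qed.

Lemma F2_fwd : forall ps Ps, (forall P, In P Ps -> forall m, tayV m P <-> tayB m (transV P)) ->
  Forall2 tayV ps Ps -> Forall2 tayB ps (map transV Ps).
Proof.
  intros ps Ps IH HF; induction HF; simpl; constructor.
  - apply IH; simpl; auto.
  - apply IHHF. intros; apply IH; simpl; auto.
Qed.

Lemma F2_bwd : forall Ps ps, (forall P, In P Ps -> forall m, tayV m P <-> tayB m (transV P)) ->
  Forall2 tayB ps (map transV Ps) -> Forall2 tayV ps Ps.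
Proof.
  induction Ps; intros ps IH HF; simpl in HF; inversion HF; subst; constructor.
  - apply IH; simpl; auto.
  - apply IHPs; auto. intros; apply IH; simpl; auto.
Qed.

Lemma tayV_iff_aux : forall k M, lsize M < k -> forall m, tayV m M <-> tayB m (transV M).
Proof.
  induction k; intros M Hk; [lia|].
  assert (IH : forall M', lsize M' < lsize M -> forall m, tayV m M' <-> tayB m (transV M'))
    by (intros; apply IHk; lia).
  clear IHk.
  assert (Hval : forall V m0, is_value V -> lsize V <= lsize M ->
            tayV (RBag [m0]) V <-> tayB m0 (inner V)).
  { intros V m0 HV Hs. destruct V; simpl in HV; try contradiction; simpl; split; intro H.
    - inversion H; subst. match goal with F : Forall _ _ |- _ => inversion F; subst end. constructor.
    - inversion H; subst. constructor. constructor; auto.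
    - inversion H; subst. match goal with F : Forall _ _ |- _ => inversion F; subst end.
      match goal with F : exists _, _ |- _ => destruct F as [m' [-> Hm]] end.
      constructor. apply IH; simpl in Hs; [lia|auto].
    - inversion H; subst. constructor. constructor; auto.
      eexists; split; [reflexivity|]. apply IH; simpl in Hs; [lia|auto]. }
  destruct M as [x|B|A N|A N]; simpl in *; intro m; split; intro H.
  - inversion H; subst. constructor. eapply Forall_impl; [|eassumption].
    intros a ->; constructor.
  - inversion H; subst. constructor. eapply Forall_impl; [|eassumption].
    intros a Ha; inversion Ha; auto.
  - inversion H; subst. constructor. eapply Forall_impl; [|eassumption].
    intros a [m' [-> Hm]]. constructor. apply IH; [lia|auto].
  - inversion H; subst. constructor. eapply Forall_impl; [|eassumption].
    intros a Ha; inversion Ha; subst. eexists; split; [reflexivity|].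
    apply IH; [lia|auto].
  - rewrite split_bang_transV.
    destruct (lsplit A) as [[V Ps]|] eqn:E.
    + destruct (lsplit_sound _ _ _ E) as [HV HA].
      inversion H; subst.
      * exfalso; eauto.
      * match goal with Heq : lplug ?V0 ?Ps0 = lplug V Ps |- _ =>
          pose proof (lsplit_complete Ps0 V0 ltac:(assumption)) as E2;
          rewrite Heq, E in E2; inversion E2; subst end.
        rewrite lsize_lplug in Hk, IH, Hval.
        constructor; [|apply IH; [lia|auto]].
        apply rplug_tay.
        -- apply Hval; auto; lia.
        -- apply F2_fwd; auto. intros P HP m1; apply IH.
           pose proof (list_sum_in (fun p => S (lsize p)) P _ HP). simpl in *; lia.
    + inversion H; subst.
      * constructor; [constructor|]; apply IH; auto; lia.
      * exfalso. rewrite lsplit_complete in E; auto; discriminate.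
  - rewrite split_bang_transV in H.
    destruct (lsplit A) as [[V Ps]|] eqn:E.
    + destruct (lsplit_sound _ _ _ E) as [HV HA]. subst A.
      inversion H; subst.
      destruct (tay_bplug_inv _ _ _ ltac:(eassumption)) as [m2 [ps [-> [Hm HF]]]].
      rewrite lsize_lplug in Hk, IH, Hval.
      apply tV_app; auto.
      * apply Hval; auto; lia.
      * apply IH; auto; lia.
      * apply F2_bwd; auto. intros P HP m1; apply IH.
        pose proof (list_sum_in (fun p => S (lsize p)) P _ HP). simpl in *; lia.
    + inversion H; subst. match goal with F : tayB _ (BDer _) |- _ => inversion F; subst end.
      constructor; try (apply IH; auto; lia).
      intros [L [V [HV ->]]]. rewrite lsplit_complete in E; auto; discriminate.
  - inversion H; subst. constructor; apply IH; auto; lia.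
  - inversion H; subst. constructor; apply IH; auto; lia.
Qed.

Theorem mainTheorem10 :
  (forall M : lterm, nf_empty (TN M) <-> nf_empty (TB (transN M))) /\
  (forall M : lterm, nf_empty (TV M) <-> nf_empty (TB (transV M))).
Proof.
  assert (K : forall X Y : rterm -> Prop, (forall m, X m <-> Y m) ->
            nf_empty X <-> nf_empty Y).
  { intros X Y HXY; unfold nf_empty, nf; split; intros H p [Hn [m [Hm Hr]]];
      apply (H p); split; auto; exists m; split; auto; apply HXY; auto. }
  split; intro M; apply K; intro m.
  - apply tayN_iff.
  - apply (tayV_iff_aux (S (lsize M))); lia.
Qed.
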